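(* An element $r\in\widetilde{\mathbb{K}}_{sm}$ is non-invertible if and only if it is a zero divisor (i.e., there exists $s\in\widetilde{\mathbb{K}}_{sm}$, $s\neq0$, with $rs=0$).
   Context: Let $I=(0,1]$ and $\mathbb{K}\in\{\mathbb{R},\mathbb{C}\}$. $\mathcal{E}_{M,sm}$ is the set of nets $(r_\varepsilon)_{\varepsilon\in I}\in\mathbb{K}^I$ with $\varepsilon\mapsto r_\varepsilon$ smooth on $I$ and $|r_\varepsilon|=O(\varepsilon^{-N})$ as $\varepsilon\to0$ for some $N\in\mathbb{N}$; $\mathcal{N}_{sm}$ is the set of smooth nets with $|r_\varepsilon|=O(\varepsilon^m)$ for all $m\in\mathbb{N}$; $\widetilde{\mathbb{K}}_{sm}=\mathcal{E}_{M,sm}/\mathcal{N}_{sm}$, a commutative ring with componentwise operations. *)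

(* Defs.v *)
From Stdlib Require Import Reals.
From Coquelicot Require Import Coquelicot.
Open Scope R_scope.

(** Nets are modelled as functions [R -> C]; for K = R we require the net
    to take real values on I = (0,1]. Only values on I are relevant. *)
Inductive Kfield := KR | KC.

Definition net := R -> C.

Definition in_I (e : R) : Prop := 0 < e <= 1.

(** A real function is smooth on I = (0,1] if it coincides on I with a
    C^infinity function on the open half line (0,+oo)
    (equivalently, by Borel/Seeley extension, it has one-sided derivatives
    of all orders at 1). *)
Definition smooth_on_I (f : R -> R) : Prop :=
  exists g : R -> R,
    (forall (n : nat) (x : R), 0 < x -> ex_derive_n g n x) /\
    (forall e, in_I e -> g e = f e).

Definition smooth_net (K : Kfield) (r : net) : Prop :=
  smooth_on_I (fun e => Re (r e)) /\ smooth_on_I (fun e => Im (r e)) /\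
  (K = KR -> forall e, in_I e -> Im (r e) = 0).

Definition moderate (r : net) : Prop :=
  exists (N : nat) (c eta : R), 0 < c /\ 0 < eta <= 1 /\
    forall e, 0 < e <= eta -> Cmod (r e) <= c * (/ e) ^ N.

Definition negligible (r : net) : Prop :=
  forall m : nat, exists (c eta : R), 0 < c /\ 0 < eta <= 1 /\
    forall e, 0 < e <= eta -> Cmod (r e) <= c * e ^ m.

Definition EMsm (K : Kfield) (r : net) : Prop := smooth_net K r /\ moderate r.
Definition Nsm (K : Kfield) (r : net) : Prop := smooth_net K r /\ negligible r.

Definition net_mul (r s : net) : net := fun e => Cmult (r e) (s e).
Definition net_sub (r s : net) : net := fun e => Cminus (r e) (s e).
Definition net_one : net := fun _ => RtoC 1.

(** Equality in the quotient K~_sm = E_{M,sm} / N_{sm} of the classes of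
    representatives r, s. *)
Definition gen_eq (K : Kfield) (r s : net) : Prop := Nsm K (net_sub r s).

Definition gen_invertible (K : Kfield) (r : net) : Prop :=
  exists s, EMsm K s /\ gen_eq K (net_mul r s) net_one.

Definition gen_zero_divisor (K : Kfield) (r : net) : Prop :=
  exists s, EMsm K s /\ ~ Nsm K s /\ Nsm K (net_mul r s).

(* Main.v *)
Require Import Defs.
From Stdlib Require Import Reals.
From Coquelicot Require Import Coquelicot.
From Stdlib Require Import Lra Lia ClassicalEpsilon Classical.
Open Scope R_scope.

Section Smooth.
Variable D : R -> Prop.
Hypothesis Dopen : forall x, D x -> locally x D.

Definition Cn (n:nat) (f:R->R) := forall k x, (k <= n)%nat -> D x -> ex_derive_n f k x.
Definition Cinf f := forall n, Cn n f.

Lemma Derive_n_S f k : Derive_n f (S k) = Derive_n (Derive f) k.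
Proof.
  induction k as [|k IH]; [reflexivity|].
  change (Derive_n f (S (S k))) with (Derive (Derive_n f (S k))).
  rewrite IH. reflexivity.
Qed.

Lemma Cn_S n f : Cn (S n) f <-> (forall x, D x -> ex_derive f x) /\ Cn n (Derive f).
Proof.
  split.
  - intros H. split.
    + intros x Hx. exact (H 1%nat x ltac:(lia) Hx).
    + intros [|j] x Hj Hx; [exact I|].
      assert (H2 := H (S (S j)) x ltac:(lia) Hx). simpl in H2 |- *.
      rewrite <- Derive_n_S. exact H2.
  - intros [H1 H2] [|[|j]] x Hj Hx; [exact I| exact (H1 x Hx)|].
    assert (H3 := H2 (S j) x ltac:(lia) Hx). simpl in H3 |- *.
    change (ex_derive (Derive_n f (S j)) x). rewrite Derive_n_S. exact H3.
Qed.

Lemma Cn_ext n f g : (forall x, D x -> f x = g x) -> Cn n f -> Cn n g.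
Proof.
  intros E H k x Hk Hx. apply (ex_derive_n_ext_loc f g).
  - apply (filter_imp D); [|exact (Dopen x Hx)]. exact E.
  - exact (H k x Hk Hx).
Qed.

Lemma Cn_mono n f : Cn (S n) f -> Cn n f.
Proof. intros H k x Hk Hx. apply H; [lia|exact Hx]. Qed.

Lemma Cn_le n m f : (m <= n)%nat -> Cn n f -> Cn m f.
Proof. intros Hmn H k x Hk Hx. apply H; [lia|exact Hx]. Qed.

Lemma Cinf_D f : Cinf f -> Cinf (Derive f).
Proof. intros H n. exact (proj2 (proj1 (Cn_S n f) (H (S n)))). Qed.

Lemma Cinf_ex f x : Cinf f -> D x -> ex_derive f x.
Proof. intros H Hx. exact (proj1 (proj1 (Cn_S 0 f) (H 1%nat)) x Hx). Qed.

Lemma Cn_const n c : Cn n (fun _ => c).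
Proof.
  revert c; induction n as [|n IH]; intros c.
  - intros [|k] x Hk Hx; [exact I|lia].
  - apply Cn_S. split.
    + intros x _. apply ex_derive_const.
    + apply (Cn_ext n (fun _ => 0)); [|apply IH].
      intros x _. rewrite Derive_const. reflexivity.
Qed.

Lemma Cn_id n : Cn n (fun x => x).
Proof.
  destruct n as [|n]. { intros [|k] x Hk Hx; [exact I|lia]. }
  apply Cn_S. split.
  + intros x _. apply ex_derive_id.
  + apply (Cn_ext n (fun _ => 1)); [|apply Cn_const].
    intros x _. symmetry. exact (Derive_id x).
Qed.

Lemma Cn_plus n f g : Cn n f -> Cn n g -> Cn n (fun x => f x + g x).
Proof.
  revert f g; induction n as [|n IH]; intros f g Hf Hg.
  - intros [|k] x Hk Hx; [exact I|lia].
  - apply Cn_S in Hf as [Hf1 Hf2]. apply Cn_S in Hg as [Hg1 Hg2].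
    apply Cn_S. split.
    + intros x Hx. apply (ex_derive_plus f g); auto.
    + apply (Cn_ext n (fun x => Derive f x + Derive g x)); [|apply IH; auto].
      intros x Hx. rewrite Derive_plus; auto.
Qed.

Lemma Cn_mult n f g : Cn n f -> Cn n g -> Cn n (fun x => f x * g x).
Proof.
  revert f g; induction n as [|n IH]; intros f g Hf Hg.
  - intros [|k] x Hk Hx; [exact I|lia].
  - assert (Hf0 := Cn_mono n f Hf). assert (Hg0 := Cn_mono n g Hg).
    apply Cn_S in Hf as [Hf1 Hf2]. apply Cn_S in Hg as [Hg1 Hg2].
    apply Cn_S. split.
    + intros x Hx. apply (ex_derive_mult f g); auto.
    + apply (Cn_ext n (fun x => Derive f x * g x + f x * Derive g x)).
      * intros x Hx. rewrite Derive_mult; auto.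
      * apply Cn_plus; apply IH; auto.
Qed.

Lemma Cn_inv n f : Cinf f -> (forall x, D x -> f x <> 0) -> Cn n (fun x => / f x).
Proof.
  intros Hf Hnz. induction n as [|n IH].
  - intros [|k] x Hk Hx; [exact I|lia].
  - apply Cn_S. split.
    + intros x Hx. apply ex_derive_inv; auto. apply Cinf_ex; auto.
    + apply (Cn_ext n (fun x => (-1) * Derive f x * (/ f x * / f x))).
      * intros x Hx. rewrite Derive_inv; [|apply Cinf_ex; auto|auto].
        specialize (Hnz x Hx). field. exact Hnz.
      * apply Cn_mult; [apply Cn_mult|apply Cn_mult]; auto.
        -- apply Cn_const.
        -- apply (Cinf_D f Hf).
Qed.
End Smooth.

Lemma Cn_comp D (Dopen : forall x, D x -> locally x D) n h f :
  Cinf (fun _ => True) h -> Cinf D f -> Cn D n (fun x => h (f x)).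
Proof.
  revert h; induction n as [|n IH]; intros h Hh Hf.
  - intros [|k] x Hk Hx; [exact I|lia].
  - apply Cn_S; auto. split.
    + intros x Hx. apply ex_derive_comp.
      * apply (Cinf_ex (fun _ => True)); auto.
      * apply (Cinf_ex D); auto.
    + apply (Cn_ext D Dopen n (fun x => Derive f x * Derive h (f x))).
      * intros x Hx. rewrite (Derive_comp h f x); auto.
        -- apply (Cinf_ex (fun _ => True)); auto.
        -- apply (Cinf_ex D); auto.
      * apply Cn_mult; auto.
        -- apply (Cinf_D D f Hf).
        -- apply IH; auto. apply (Cinf_D _ h Hh).
Qed.


Lemma series_term_le (a : nat -> R) m :
  (forall k, 0 <= a k) -> ex_series a -> a m <= Series a.
Proof.
  intros Hpos Hex.
  rewrite (Series_incr_n a (S m)); [|lia|exact Hex]. simpl pred.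
  assert (Hs : a m <= sum_f_R0 a m).
  { destruct m as [|m]; simpl; [lra|]. pose proof (cond_pos_sum a m Hpos). lra. }
  assert (Ht : 0 <= Series (fun k => a (S m + k)%nat)).
  { assert (E : Series (fun _ : nat => 0) = 0).
    { rewrite (Series_ext _ (fun n => 0 * a n)); [|intros; ring].
      rewrite Series_scal_l. ring. }
    rewrite <- E. apply Series_le; [intros; split; [lra|apply Hpos]|].
    apply (ex_series_incr_n a (S m)). exact Hex. }
  lra.
Qed.

Lemma radius_ratio (a : nat -> R) :
  (forall k, 0 < a k) -> (forall k, a (S k) <= / INR (S k) * a k) ->
  CV_radius a = p_infty.
Proof.
  intros Hp Hr. apply CV_radius_infinite_DAlembert.
  - intros k. specialize (Hp k). lra.
  - apply (is_lim_seq_le_le (fun _ => 0) _ (fun k => / INR (S k))).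
    + intros k. split; [apply Rabs_pos|].
      pose proof (Hp (S k)) as HpS. specialize (Hp k). specialize (Hr k).
      rewrite Rabs_right.
      * apply (Rmult_le_reg_r (a k)); [lra|]. unfold Rdiv.
        rewrite Rmult_assoc, Rinv_l by lra. lra.
      * unfold Rdiv. apply Rle_ge. apply Rmult_le_pos; [lra|].
        left. apply Rinv_0_lt_compat. lra.
    + apply is_lim_seq_const.
    + apply (is_lim_seq_incr_1 (fun k => / INR k)).
      replace (Finite 0) with (Rbar_inv p_infty) by reflexivity.
      apply is_lim_seq_inv; [apply is_lim_seq_INR|discriminate].
Qed.

Section Gauge.
Variable e : nat -> R.
Hypothesis He : forall j, 0 < e j <= 1.

Fixpoint P k := match k with O => 1 | S k => P k * e k end.
Definition cg k := / INR (Factorial.fact k) * P k ^ k.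

Lemma P_pos k : 0 < P k <= 1.
Proof.
  induction k as [|k IH]; simpl; [lra|]. specialize (He k).
  split; [apply Rmult_lt_0_compat; lra|].
  rewrite <- (Rmult_1_l 1). apply Rmult_le_compat; lra.
Qed.

Lemma P_decr k : P (S k) <= P k.
Proof. simpl. pose proof (P_pos k). specialize (He k). nra. Qed.

Lemma P_le_e j k : (j < k)%nat -> P k <= e j.
Proof.
  induction k as [|k IH]; intros Hjk; [lia|].
  destruct (Nat.eq_dec j k) as [->|Hne].
  - simpl. pose proof (P_pos k). specialize (He k). nra.
  - pose proof (P_decr k). pose proof (IH ltac:(lia)). lra.
Qed.

Lemma cg_pos k : 0 < cg k.
Proof.
  unfold cg. apply Rmult_lt_0_compat.
  - apply Rinv_0_lt_compat, INR_fact_lt_0.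
  - apply pow_lt, P_pos.
Qed.

Lemma cg_le k : cg k <= / INR (Factorial.fact k).
Proof.
  unfold cg. pose proof (Rinv_0_lt_compat _ (INR_fact_lt_0 k)).
  assert (P k ^ k <= 1).
  { rewrite <- (pow1 k). apply pow_incr. pose proof (P_pos k); lra. }
  nra.
Qed.

Lemma cg_radius : CV_radius cg = p_infty.
Proof.
  apply radius_ratio; [apply cg_pos|].
  intros k. unfold cg.
  rewrite fact_simpl, mult_INR, Rinv_mult.
  pose proof (Rinv_0_lt_compat _ (INR_fact_lt_0 k)).
  assert (0 < / INR (S k)) by (apply Rinv_0_lt_compat, lt_0_INR; lia).
  assert (P (S k) ^ S k <= P k ^ k).
  { simpl pow. pose proof (P_pos (S k)). pose proof (P_pos k).
    assert (P (S k) ^ k <= P k ^ k) by (apply pow_incr; pose proof (P_decr k); lra).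
    assert (0 <= P (S k) ^ k) by (apply pow_le; lra). simpl in *. nra. }
  rewrite Rmult_assoc. apply Rmult_le_compat_l; [lra|].
  apply Rmult_le_compat_l; lra.
Qed.

Definition G x := PSeries cg (/ x).

Lemma G_terms_ex y : ex_series (fun k => cg k * y ^ k).
Proof.
  assert (H := CV_radius_inside cg y). rewrite cg_radius in H.
  specialize (H I). unfold ex_pseries in H.
  apply (ex_series_ext _ _ (fun k => Rmult_comm _ _)) in H. exact H.
Qed.

Lemma G_lower x m : 0 < x -> cg m * (/ x) ^ m <= G x.
Proof.
  intros Hx. unfold G, PSeries.
  apply (series_term_le (fun k => cg k * (/ x) ^ k) m).
  - intros k. apply Rmult_le_pos; [left; apply cg_pos|].
    apply pow_le. left. apply Rinv_0_lt_compat. exact Hx.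
  - apply G_terms_ex.
Qed.

Lemma G_pos x : 0 < x -> 0 < G x.
Proof.
  intros Hx. pose proof (G_lower x 0 Hx). simpl in H.
  pose proof (cg_pos 0). lra.
Qed.

Lemma exp_series : exp 1 = Series (fun k => / INR (Factorial.fact k)).
Proof.
  rewrite exp_Reals. unfold PSeries. apply Series_ext. intros k. rewrite pow1. ring.
Qed.

Lemma ex_series_fact : ex_series (fun k => / INR (Factorial.fact k)).
Proof.
  assert (Hr : CV_radius (fun k => / INR (Factorial.fact k)) = p_infty).
  { apply radius_ratio.
    - intros k. apply Rinv_0_lt_compat, INR_fact_lt_0.
    - intros k. rewrite fact_simpl, mult_INR, Rinv_mult. lra. }
  assert (H := CV_radius_inside (fun k => / INR (Factorial.fact k)) 1). rewrite Hr in H.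
  specialize (H I). unfold ex_pseries in H.
  revert H. apply ex_series_ext. intros k. simpl. rewrite pow_n_pow, pow1. apply Rmult_1_l.
Qed.

Lemma G_upper n : G (e n) <= (/ e n) ^ n * exp 1.
Proof.
  unfold G, PSeries. rewrite exp_series, <- Series_scal_l.
  pose proof (He n) as Hen.
  assert (Hy : 1 <= / e n).
  { rewrite <- Rinv_1. apply Rinv_le_contravar; lra. }
  apply Series_le.
  - intros k. split.
    + apply Rmult_le_pos; [left; apply cg_pos|]. apply pow_le. lra.
    + destruct (Compare_dec.le_lt_dec k n) as [Hk|Hk].
      * pose proof (cg_le k). pose proof (cg_pos k).
        assert ((/ e n) ^ k <= (/ e n) ^ n) by (apply Rle_pow; auto).
        assert (0 <= (/ e n) ^ k) by (apply pow_le; lra).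
        pose proof (Rinv_0_lt_compat _ (INR_fact_lt_0 k)). nra.
      * unfold cg. pose proof (P_le_e n k Hk). pose proof (P_pos k).
        assert (P k ^ k * (/ e n) ^ k <= 1).
        { rewrite <- Rpow_mult_distr, <- (pow1 k). apply pow_incr.
          split; [apply Rmult_le_pos; lra|].
          apply (Rmult_le_reg_r (e n)); [lra|].
          rewrite Rmult_assoc, Rinv_l by lra. lra. }
        assert (1 <= (/ e n) ^ n) by (rewrite <- (pow1 n); apply pow_incr; lra).
        pose proof (Rinv_0_lt_compat _ (INR_fact_lt_0 k)). nra.
  - apply (ex_series_scal_l ((/ e n) ^ n) (fun k => / INR (Factorial.fact k))). apply ex_series_fact.
Qed.

End Gauge.


Lemma pow_inv_mul e N m : 0 < e -> (/ e) ^ N * e ^ (m + N) = e ^ m.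
Proof.
  intros He. rewrite pow_add, <- Rmult_assoc, (Rmult_comm _ (e ^ m)), Rmult_assoc.
  rewrite <- Rpow_mult_distr, Rinv_l by lra. rewrite pow1. ring.
Qed.

Lemma negl_mod_mul a b : moderate a -> negligible b ->
  forall m, exists c eta, 0 < c /\ 0 < eta <= 1 /\
    forall e, 0 < e <= eta -> Cmod (a e) * Cmod (b e) <= c * e ^ m.
Proof.
  intros [N [c1 [eta1 [Hc1 [Heta1 Ha]]]]] Hb m.
  destruct (Hb (m + N)%nat) as [c2 [eta2 [Hc2 [Heta2 Hb2]]]].
  exists (c1 * c2), (Rmin eta1 eta2). split; [nra|]. split.
  { split; [apply Rmin_glb_lt; lra|]. pose proof (Rmin_l eta1 eta2). lra. }
  intros e He. pose proof (Rmin_l eta1 eta2). pose proof (Rmin_r eta1 eta2).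
  specialize (Ha e ltac:(lra)). specialize (Hb2 e ltac:(lra)).
  pose proof (Cmod_ge_0 (a e)). pose proof (Cmod_ge_0 (b e)).
  apply Rle_trans with ((c1 * (/ e) ^ N) * (c2 * e ^ (m + N))).
  - apply Rmult_le_compat; auto.
  - rewrite <- (pow_inv_mul e N m) by lra. lra.
Qed.

Lemma negl_bound f a1 b1 a2 b2 :
  moderate a1 -> negligible b1 -> moderate a2 -> negligible b2 ->
  (forall e, 0 < e <= 1 -> Cmod (f e) <= Cmod (a1 e) * Cmod (b1 e) + Cmod (a2 e) * Cmod (b2 e)) ->
  negligible f.
Proof.
  intros H1 H2 H3 H4 Hf m.
  destruct (negl_mod_mul a1 b1 H1 H2 m) as [c1 [eta1 [Hc1 [Heta1 HA]]]].
  destruct (negl_mod_mul a2 b2 H3 H4 m) as [c2 [eta2 [Hc2 [Heta2 HB]]]].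
  exists (c1 + c2), (Rmin eta1 eta2). split; [lra|]. split.
  { split; [apply Rmin_glb_lt; lra|]. pose proof (Rmin_l eta1 eta2). lra. }
  intros e He. pose proof (Rmin_l eta1 eta2). pose proof (Rmin_r eta1 eta2).
  specialize (HA e ltac:(lra)). specialize (HB e ltac:(lra)).
  specialize (Hf e ltac:(lra)). lra.
Qed.

Lemma dir1 K r : EMsm K r -> gen_zero_divisor K r -> ~ gen_invertible K r.
Proof.
  intros Hr [s [Hs [Hns Hrs]]] [t [Ht Hrt]].
  apply Hns. split; [exact (proj1 Hs)|].
  apply (negl_bound s t (net_mul r s) s (net_sub (net_mul r t) net_one)
           (proj2 Ht) (proj2 Hrs) (proj2 Hs) (proj2 Hrt)).
  intros e _.
  assert (E : s e = Cplus (Cmult (t e) (net_mul r s e))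
                          (Copp (Cmult (s e) (net_sub (net_mul r t) net_one e)))).
  { unfold net_mul, net_sub, net_one, Cminus, Cplus, Copp, Cmult, RtoC.
    destruct (s e), (t e), (r e). simpl. apply injective_projections; simpl; ring. }
  rewrite E at 1. eapply Rle_trans; [apply Cmod_triangle|].
  rewrite Cmod_opp, !Cmod_mult. lra.
Qed.


Definition Dp := fun y : R => 0 < y.
Lemma Dp_open : forall x, Dp x -> locally x Dp.
Proof. intros x Hx. exact (open_gt 0 x Hx). Qed.

Lemma Ci_sm g : Cinf Dp g -> forall n x, 0 < x -> ex_derive_n g n x.
Proof. intros H n x Hx. exact (H n n x (le_n n) Hx). Qed.

Lemma sm_Ci g : (forall n x, 0 < x -> ex_derive_n g n x) -> Cinf Dp g.
Proof. intros H n k x _ Hx. exact (H k x Hx). Qed.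

Lemma G_Ci e (He : forall j, 0 < e j <= 1) : Cinf Dp (G e).
Proof.
  intros n. unfold G. apply (Cn_comp Dp Dp_open n (PSeries (cg e)) (fun x => / x)).
  - intros m k x _ _. apply ex_derive_n_PSeries. rewrite (cg_radius e He). exact I.
  - intros m. apply (Cn_inv Dp Dp_open m (fun x => x)).
    + intros p. apply (Cn_id Dp Dp_open).
    + intros x Hx. unfold Dp in Hx. cbv beta. lra.
Qed.

Lemma Cmod_sq z : Cmod z * Cmod z = Re z * Re z + Im z * Im z.
Proof.
  unfold Cmod. rewrite sqrt_sqrt.
  - unfold Re, Im. ring.
  - pose proof (pow2_ge_0 (fst z)). pose proof (pow2_ge_0 (snd z)). lra.
Qed.

Lemma Cmod_Im0 z : Im z = 0 -> Cmod z = Rabs (Re z).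
Proof.
  intros H. destruct z as [a b]. unfold Im in H. simpl in H. subst b.
  apply Cmod_R.
Qed.

Ltac closure := repeat first
  [ apply (Cn_plus Dp Dp_open) | apply (Cn_mult Dp Dp_open) | apply (Cn_const Dp Dp_open) | apply (Cn_id Dp Dp_open) ].


Ltac cl H1 H2 H3 := intros ?; repeat first
  [ refine (Cn_plus Dp Dp_open _ _ _ _ _) | refine (Cn_mult Dp Dp_open _ _ _ _ _)
  | refine (Cn_const Dp Dp_open _ _)
  | refine (Cn_id Dp Dp_open _) | refine (H1 _) | refine (H2 _) | refine (H3 _) ].

Lemma eta_pos n : 0 < / (INR n + 1) <= 1.
Proof.
  pose proof (pos_INR n). split; [apply Rinv_0_lt_compat; lra|].
  rewrite <- Rinv_1. apply Rinv_le_contravar; lra.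
Qed.

Lemma inv_construct K r : EMsm K r ->
  (exists n, forall y, 0 < y <= / (INR n + 1) -> y ^ n <= Cmod (r y)) ->
  gen_invertible K r.
Proof.
  intros [[[ga [Hga Ega]] [[gb [Hgb Egb]] HK]] _] [n0 Hn0].
  cbv beta in Ega, Egb.
  apply sm_Ci in Hga. apply sm_Ci in Hgb.
  set (e1 := fun _ : nat => 1).
  assert (He1 : forall j, 0 < e1 j <= 1) by (intros; unfold e1; lra).
  set (G1 := G e1).
  assert (HG1 : Cinf Dp G1) by apply (G_Ci e1 He1).
  assert (HG1p : forall x, 0 < x -> 0 < G1 x) by (intros; apply (G_pos e1 He1); auto).
  set (W := fun x => / (ga x * ga x + gb x * gb x + / G1 x)).
  assert (HWd : forall x, 0 < x -> 0 < ga x * ga x + gb x * gb x + / G1 x).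
  { intros x Hx. pose proof (HG1p x Hx). pose proof (Rinv_0_lt_compat _ H). nra. }
  assert (HiG : Cinf Dp (fun x => / G1 x)).
  { intros m. apply (Cn_inv Dp Dp_open m G1); auto.
    intros x Hx. pose proof (HG1p x Hx). lra. }
  assert (HW : Cinf Dp W).
  { intros m. apply (Cn_inv Dp Dp_open m (fun x => ga x * ga x + gb x * gb x + / G1 x)).
    - cl Hga Hgb HiG.
    - intros x Hx. pose proof (HWd x Hx). lra. }
  exists (fun y => Cmult (Cconj (r y)) (RtoC (W y))).
  split; [split; [split; [|split]|]|].
  - exists (fun x => ga x * W x). split; [refine (Ci_sm _ _); cl Hga Hgb HW|].
    intros y Hy. rewrite (Ega y Hy). unfold Re, Cmult, Cconj, RtoC. simpl. ring.
  - exists (fun x => (-1) * gb x * W x). split; [refine (Ci_sm _ _); cl Hga Hgb HW|].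
    intros y Hy. rewrite (Egb y Hy). unfold Im, Re, Cmult, Cconj, RtoC. simpl. ring.
  - intros HKR y Hy. specialize (HK HKR y Hy). revert HK.
    unfold Im, Re, Cmult, Cconj, RtoC. simpl. intros HK. rewrite HK. ring.
  - exists n0, 1, (/ (INR n0 + 1)). split; [lra|]. split; [apply eta_pos|].
    intros y Hy. pose proof (eta_pos n0).
    assert (HyI : in_I y) by (unfold in_I; lra).
    rewrite Cmod_mult, Cmod_conj, Cmod_R.
    set (rho := Cmod (r y)).
    assert (Hrho : y ^ n0 <= rho) by (apply Hn0; exact Hy).
    assert (Hyn : 0 < y ^ n0) by (apply pow_lt; lra).
    assert (Hsq : rho * rho = ga y * ga y + gb y * gb y).
    { unfold rho. rewrite Cmod_sq, (Ega y HyI), (Egb y HyI). reflexivity. }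
    assert (Hd : 0 < / G1 y) by (apply Rinv_0_lt_compat, HG1p; lra).
    unfold W. rewrite <- Hsq.
    set (D := rho * rho + / G1 y).
    assert (HD : 0 < D) by (unfold D; nra).
    rewrite Rabs_right by (left; apply Rinv_0_lt_compat; exact HD).
    assert (E1 : rho * / D = / rho * (rho * rho * / D)) by (field; split; lra).
    rewrite E1.
    assert (rho * rho * / D <= 1).
    { apply (Rmult_le_reg_r D); [exact HD|]. rewrite Rmult_assoc, Rinv_l by lra. unfold D. lra. }
    assert (0 < / rho) by (apply Rinv_0_lt_compat; lra).
    assert (/ rho <= (/ y) ^ n0).
    { rewrite pow_inv. apply Rinv_le_contravar; lra. }
    nra.
  - split.
    + split; [|split].
      * exists (fun x => ga x * (ga x * W x) + gb x * (gb x * W x) + (-1)).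
        split; [refine (Ci_sm _ _); cl Hga Hgb HW|].
        intros y Hy. rewrite (Ega y Hy), (Egb y Hy).
        unfold net_sub, net_mul, net_one, Cminus, Cplus, Copp, Im, Re, Cmult, Cconj, RtoC. simpl. ring.
      * exists (fun _ => 0). split; [refine (Ci_sm _ _); cl Hga Hgb HW|].
        intros y Hy.
        unfold net_sub, net_mul, net_one, Cminus, Cplus, Copp, Im, Re, Cmult, Cconj, RtoC. simpl. ring.
      * intros _ y Hy.
        unfold net_sub, net_mul, net_one, Cminus, Cplus, Copp, Im, Re, Cmult, Cconj, RtoC. simpl. ring.
    + intros m. set (M := (m + (n0 + n0))%nat). set (cM := cg e1 M).
      assert (HcM : 0 < cM) by apply (cg_pos e1 He1).
      exists (/ cM), (/ (INR n0 + 1)). split; [apply Rinv_0_lt_compat; exact HcM|].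
      split; [apply eta_pos|].
      intros y Hy. pose proof (eta_pos n0).
      assert (HyI : in_I y) by (unfold in_I; lra).
      set (z := net_sub _ _ y).
      assert (HIm : Im z = 0).
      { unfold z, net_sub, net_mul, net_one, Cminus, Cplus, Copp, Im, Re, Cmult, Cconj, RtoC. simpl. ring. }
      rewrite (Cmod_Im0 z HIm).
      set (a := Re (r y)). set (b := Im (r y)).
      set (d := / G1 y).
      assert (Hd : 0 < d) by (apply Rinv_0_lt_compat, HG1p; lra).
      assert (HD : 0 < a * a + b * b + d) by nra.
      assert (HRe : Re z = - (d * / (a * a + b * b + d))).
      { unfold z, net_sub, net_mul, net_one, Cminus, Cplus, Copp, Cmult, Cconj, RtoC, W.
        unfold Re at 1. simpl.
        rewrite (Ega y HyI), (Egb y HyI). fold d. unfold a, b, Re, Im. unfold a, b, Re, Im in HD. field. lra. }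
      rewrite HRe, Rabs_Ropp, Rabs_right by (left; apply Rmult_lt_0_compat; [lra|apply Rinv_0_lt_compat; lra]).
      assert (Hrho : y ^ n0 <= Cmod (r y)) by (apply Hn0; exact Hy).
      assert (Hyn : 0 < y ^ n0) by (apply pow_lt; lra).
      assert (Hsq : Cmod (r y) * Cmod (r y) = a * a + b * b) by (unfold a, b; apply Cmod_sq).
      assert (H1 : y ^ n0 * y ^ n0 <= a * a + b * b).
      { rewrite <- Hsq. apply Rmult_le_compat; lra. }
      assert (H2 : / (a * a + b * b + d) <= / (y ^ n0 * y ^ n0)).
      { apply Rinv_le_contravar; nra. }
      assert (HG : cM * (/ y) ^ M <= G1 y) by (apply (G_lower e1 He1); lra).
      assert (HyM : 0 < (/ y) ^ M) by (apply pow_lt, Rinv_0_lt_compat; lra).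
      assert (H3 : d <= / (cM * (/ y) ^ M)).
      { apply Rinv_le_contravar; [nra|exact HG]. }
      assert (H4 : / (cM * (/ y) ^ M) * / (y ^ n0 * y ^ n0) = / cM * y ^ m).
      { unfold M. rewrite !pow_add, !pow_inv. field. split; [|split]; try lra.
        apply pow_nonzero; lra. }
      rewrite <- H4.
      apply Rmult_le_compat; try lra.
      left; apply Rinv_0_lt_compat; lra.
Qed.


Ltac unf := unfold net_sub, net_mul, net_one, Cminus, Cplus, Copp, Im, Re, Cmult, Cconj, RtoC.

Lemma zd_construct K r : EMsm K r ->
  (forall n, exists y, 0 < y <= / (INR n + 1) /\ Cmod (r y) < y ^ n) ->
  gen_zero_divisor K r.
Proof.
  intros [[[ga [Hga Ega]] [[gb [Hgb Egb]] HK]] _] Hseq.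
  cbv beta in Ega, Egb.
  apply sm_Ci in Hga. apply sm_Ci in Hgb.
  set (e := fun n => proj1_sig (constructive_indefinite_description _ (Hseq n))).
  assert (Hes : forall n, (0 < e n <= / (INR n + 1)) /\ Cmod (r (e n)) < e n ^ n).
  { intros n. unfold e. destruct (constructive_indefinite_description _ (Hseq n)) as [y Hy].
    exact Hy. }
  assert (He : forall j, 0 < e j <= 1).
  { intros j. pose proof (eta_pos j). destruct (Hes j) as [[? ?] _]. lra. }
  set (Gs := G e).
  assert (HGs : Cinf Dp Gs) by apply (G_Ci e He).
  assert (HGp : forall x, 0 < x -> 0 < Gs x) by (intros; apply (G_pos e He); auto).
  set (S := fun x => / (1 + Gs x * (ga x * ga x + gb x * gb x))).
  assert (HSd : forall x, 0 < x -> 1 <= 1 + Gs x * (ga x * ga x + gb x * gb x)).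
  { intros x Hx. pose proof (HGp x Hx).
    pose proof (Rle_0_sqr (ga x)); pose proof (Rle_0_sqr (gb x)); unfold Rsqr in *.
    assert (0 <= Gs x * (ga x * ga x + gb x * gb x)) by (apply Rmult_le_pos; lra). lra. }
  assert (HS : Cinf Dp S).
  { intros m. apply (Cn_inv Dp Dp_open m (fun x => 1 + Gs x * (ga x * ga x + gb x * gb x))).
    - cl Hga Hgb HGs.
    - intros x Hx. pose proof (HSd x Hx). lra. }
  assert (HSv : forall y, 0 < y <= 1 ->
    S y = / (1 + Gs y * (Cmod (r y) * Cmod (r y))) /\ 0 < S y <= 1).
  { intros y Hy. assert (HyI : in_I y) by (unfold in_I; lra).
    assert (E : S y = / (1 + Gs y * (Cmod (r y) * Cmod (r y)))).
    { unfold S. rewrite Cmod_sq, (Ega y HyI), (Egb y HyI). reflexivity. }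
    split; [exact E|]. pose proof (HSd y ltac:(lra)). unfold S.
    split; [apply Rinv_0_lt_compat; lra|]. rewrite <- Rinv_1. apply Rinv_le_contravar; lra. }
  exists (fun y => RtoC (S y)).
  split; [split; [split; [|split]|]|split].
  - exists S. split; [refine (Ci_sm _ _); exact HS|]. intros y Hy. reflexivity.
  - exists (fun _ => 0). split; [refine (Ci_sm _ _); cl Hga Hgb HS|]. intros y Hy. reflexivity.
  - intros _ y Hy. reflexivity.
  - exists 0%nat, 1, 1. split; [lra|]. split; [lra|].
    intros y Hy. rewrite Cmod_R. destruct (HSv y Hy) as [_ HS1].
    rewrite Rabs_right by lra. simpl. lra.
  - intros [_ Hneg]. destruct (Hneg 1%nat) as [c [eta [Hc [Heta Hb]]]].
    set (E := exp 1). assert (HE : 0 < E) by apply exp_pos.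
    assert (Hq : 0 < Rmin eta (/ (c * (1 + E)))).
    { apply Rmin_glb_lt; [lra|]. apply Rinv_0_lt_compat. nra. }
    destruct (archimed_cor1 _ Hq) as [N [HN HN0]].
    pose proof (Rmin_l eta (/ (c * (1 + E)))). pose proof (Rmin_r eta (/ (c * (1 + E)))).
    destruct (Hes N) as [[HeN1 HeN2] HrN].
    assert (HNp : 0 < INR N) by (apply lt_0_INR; lia).
    assert (HeN3 : e N < / INR N).
    { eapply Rle_lt_trans; [exact HeN2|]. apply Rinv_lt_contravar; nra. }
    set (y := e N) in *.
    specialize (Hb y ltac:(lra)).
    destruct (HSv y ltac:(pose proof (He N); lra)) as [HSy _].
    rewrite Cmod_R, Rabs_right in Hb by (rewrite HSy; left; apply Rinv_0_lt_compat;
      pose proof (HGp y HeN1); pose proof (Cmod_ge_0 (r y)); nra).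
    rewrite HSy in Hb.
    set (rho := Cmod (r y)) in *.
    assert (Hrho0 : 0 <= rho) by apply Cmod_ge_0.
    assert (HGu : Gs y <= (/ y) ^ N * E) by (apply (G_upper e He N)).
    assert (HyN : 0 < y ^ N) by (apply pow_lt; lra).
    assert (HyN1 : y ^ N <= 1) by (rewrite <- (pow1 N); apply pow_incr; pose proof (He N); lra).
    assert (Hr2 : rho * rho <= y ^ N * y ^ N) by (apply Rmult_le_compat; lra).
    assert (Hid : (/ y) ^ N * y ^ N = 1).
    { rewrite <- Rpow_mult_distr, Rinv_l by lra. apply pow1. }
    assert (HGp' := HGp y HeN1).
    assert (Hprod : Gs y * (rho * rho) <= E).
    { apply Rle_trans with (((/ y) ^ N * E) * (y ^ N * y ^ N)).
      - apply Rmult_le_compat; try lra. nra.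
      - replace ((/ y) ^ N * E * (y ^ N * y ^ N)) with (E * y ^ N * ((/ y) ^ N * y ^ N)) by ring.
        rewrite Hid. nra. }
    assert (Hlow : / (1 + E) <= / (1 + Gs y * (rho * rho))).
    { apply Rinv_le_contravar; [|lra]. assert (0 <= Gs y * (rho * rho)) by nra. lra. }
    assert (Hup : c * y ^ 1 < / (1 + E)).
    { simpl. rewrite Rmult_1_r.
      assert (y < / (c * (1 + E))) by (eapply Rlt_trans; [exact HeN3|]; lra).
      apply (Rmult_lt_compat_l c) in H1; [|lra].
      rewrite Rinv_mult, <- Rmult_assoc, Rinv_r, Rmult_1_l in H1; lra. }
    lra.
  - split; [split; [|split]|].
    + exists (fun x => ga x * S x). split; [refine (Ci_sm _ _); cl Hga Hgb HS|].
      intros y Hy. rewrite (Ega y Hy). unf. simpl. ring.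
    + exists (fun x => gb x * S x). split; [refine (Ci_sm _ _); cl Hga Hgb HS|].
      intros y Hy. rewrite (Egb y Hy). unf. simpl. ring.
    + intros HKR y Hy. specialize (HK HKR y Hy). revert HK. unf. simpl. intros HK. rewrite HK. ring.
    + intros m. set (cM := cg e (m + m)).
    assert (HcM : 0 < cM) by apply (cg_pos e He).
    exists (1 + / cM), 1. split; [pose proof (Rinv_0_lt_compat _ HcM); lra|]. split; [lra|].
    intros y Hy. unfold net_mul. rewrite Cmod_mult, Cmod_R.
    destruct (HSv y Hy) as [HSy HS1]. rewrite Rabs_right by lra. rewrite HSy.
    set (rho := Cmod (r y)).
    assert (Hrho0 : 0 <= rho) by apply Cmod_ge_0.
    assert (HG : cM * (/ y) ^ (m + m) <= Gs y) by (apply (G_lower e He); lra).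
    assert (Hym : 0 < y ^ m) by (apply pow_lt; lra).
    assert (Hyi : 0 < (/ y) ^ m) by (apply pow_lt, Rinv_0_lt_compat; lra).
    assert (Hid : (/ y) ^ m * y ^ m = 1).
    { rewrite <- Rpow_mult_distr, Rinv_l by lra. apply pow1. }
    assert (HiC : 0 < / cM) by (apply Rinv_0_lt_compat; lra).
    assert (HGp' := HGp y ltac:(lra)).
    destruct (Rle_lt_dec rho (y ^ m)) as [Hle|Hlt].
    + assert (rho * / (1 + Gs y * (rho * rho)) <= rho).
      { assert (Hi : / (1 + Gs y * (rho*rho)) <= 1)
          by (rewrite <- Rinv_1; apply Rinv_le_contravar; [lra|nra]).
        nra. }
      nra.
    +
      assert (Hpos : 0 < rho) by lra.
      assert (H1 : rho * / (1 + Gs y * (rho * rho)) <= / (Gs y * rho)).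
      { assert (Hq1 : 0 < Gs y * rho) by (apply Rmult_lt_0_compat; lra).
        assert (Hq2 : 0 < Gs y * (rho * rho)) by (apply Rmult_lt_0_compat; nra).
        apply (Rmult_le_reg_r ((1 + Gs y * (rho * rho)) * (Gs y * rho))).
        - apply Rmult_lt_0_compat; lra.
        - replace (rho * / (1 + Gs y * (rho * rho)) * ((1 + Gs y * (rho * rho)) * (Gs y * rho)))
            with (Gs y * rho * rho) by (field; lra).
          replace (/ (Gs y * rho) * ((1 + Gs y * (rho * rho)) * (Gs y * rho)))
            with (1 + Gs y * (rho * rho)) by (field; lra).
          nra. }
      assert (H2 : cM * (/ y) ^ m <= Gs y * rho).
      { apply Rle_trans with (cM * (/ y) ^ (m + m) * y ^ m).
        - rewrite pow_add. replace (cM * ((/ y) ^ m * (/ y) ^ m) * y ^ m)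
            with (cM * (/ y) ^ m * ((/ y) ^ m * y ^ m)) by ring. rewrite Hid. lra.
        - apply Rmult_le_compat; try lra.
          apply Rmult_le_pos; [lra|]. apply pow_le. left. apply Rinv_0_lt_compat. lra. }
      assert (H3 : / (Gs y * rho) <= / cM * y ^ m).
      { replace (/ cM * y ^ m) with (/ (cM * (/ y) ^ m)).
        - apply Rinv_le_contravar; [nra|exact H2].
        - rewrite pow_inv. field. split; lra. }
      nra.
Qed.

Theorem proposition4p1 (K : Kfield) (r : net) :
  EMsm K r -> (~ gen_invertible K r <-> gen_zero_divisor K r).
Proof.
  intros Hr. split.
  - intros Hni. apply (zd_construct K r Hr).
    intros n. apply NNPP. intros Hne. apply Hni. apply (inv_construct K r Hr).
    exists n. intros y Hy. apply Rnot_lt_le. intros Hlt. apply Hne. exists y. split; assumption.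
  - apply dir1. exact Hr.
Qed.
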